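(* Fix $C<1$ and let $C_u=C+\alpha_n$. There is an integer $N\ge1$ such that $C_u<1$ for all $n\ge N$, and for all $n\ge N$, all $1\le i\le n$ and all $1\le t\le n$, \[ \mathbb{E}(\#\mathcal{N}_t(i))\le C_u^t\qquad\text{and}\qquad\mathbb{E}\big((\#\mathcal{N}_t(i))^2\big)\le\frac{C_u^t}{1-C_u}. \]
   Context: Let $C>0$ be a constant and $(\alpha_n)_{n\ge1}$ a sequence of nonnegative reals with $\alpha_n\to0$. For each $n$, consider the complete graph $K_n$ on vertex set $\{1,\dots,n\}$; each edge $e$ of $K_n$ is independently open with probability $p_n(e)$ and closed otherwise, where $\frac{C-\alpha_n}{n}\le p_n(e)\le\frac{C+\alpha_n}{n}$ for every edge $e$. Let $G$ be the resulting random graph of open edges, with probability measure $\mathbb{P}$ and expectation $\mathbb{E}$. For a vertex $i$ and integer $t\ge1$, $\mathcal{N}_t(i)$ is the set of vertices at graph distance exactly $t$ from $i$ in $G$ (distance = least number of open edges in a path joining them), and $\#\mathcal{N}_t(i)$ its cardinality. *)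

(* Defs.v *)
From HB Require Import structures.
From mathcomp Require Import all_boot all_order all_algebra.
From mathcomp Require Import all_classical all_reals all_analysis.
Set Implicit Arguments. Unset Strict Implicit. Unset Printing Implicit Defensive.
Import Order.TTheory GRing.Theory Num.Theory.
Local Open Scope ring_scope.

(* Edges of the complete graph K_n on vertex set 'I_n (vertices 1..n of the
   paper are 0..n-1 here): unordered pairs {i,j}, i<>j, encoded as (i,j), i<j. *)
Definition edge (n : nat) : finType := {e : 'I_n * 'I_n | (e.1 < e.2)%N}.

Definition config (n : nat) : finType := {ffun edge n -> bool}.

Section RG.
Variable R : realType.
Variable n : nat.

Definition cfg_prob (p : edge n -> R) (w : config n) : R :=
  \prod_(e : edge n) (if w e then p e else 1 - p e).

Definition Expect (p : edge n -> R) (X : config n -> R) : R :=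
  \sum_(w : config n) cfg_prob p w * X w.

Definition adj (w : config n) : rel 'I_n := fun i j =>
  [exists e : edge n, w e && ((val e == (i, j)) || (val e == (j, i)))].

Definition walk (w : config n) (k : nat) (i j : 'I_n) : bool :=
  [exists s : k.-tuple 'I_n, path (adj w) i s && (last i s == j)].

(* N_t(i): vertices at graph distance exactly t from i
   (a walk of length t exists, and none of length < t). *)
Definition Nt (w : config n) (t : nat) (i : 'I_n) : {set 'I_n} :=
  [set j | walk w t i j & [forall k : 'I_t, ~~ walk w k i j]].
End RG.

(* Main.v *)
Require Import Defs.
From HB Require Import structures.
From mathcomp Require Import all_boot all_order all_algebra.
From mathcomp Require Import all_classical all_reals all_analysis.
Import Order.TTheory GRing.Theory Num.Theory numFieldNormedType.Exports.
Local Open Scope classical_set_scope.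
Local Open Scope ring_scope.
Set Implicit Arguments. Unset Strict Implicit. Unset Printing Implicit Defensive.
From mathcomp Require Import zify.
Section Prob.
Variable R : realType.
Variable n : nat.
Implicit Types (p : edge n -> R) (w : config n).

Lemma cfg_prob_ge0 p w : (forall e, 0 <= p e <= 1) -> 0 <= cfg_prob p w.
Proof.
move=> hp; apply: prodr_ge0 => e _; have /andP[h0 h1] := hp e.
by case: (w e) => //; rewrite subr_ge0.
Qed.

Lemma Expect_le p (X Y : config n -> R) : (forall e, 0 <= p e <= 1) ->
  (forall w, X w <= Y w) -> Expect p X <= Expect p Y.
Proof.
move=> hp hXY; apply: ler_sum => w _; apply: ler_wpM2l; first exact: cfg_prob_ge0.
exact: hXY.
Qed.

Lemma Expect_sum p (I : Type) (r : seq I) (P : pred I) (F : I -> config n -> R) :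
  Expect p (fun w => \sum_(i <- r | P i) F i w) = \sum_(i <- r | P i) Expect p (F i).
Proof.
rewrite /Expect exchange_big /=; apply: eq_bigr => w _.
by rewrite mulr_sumr.
Qed.

Lemma Expect_forall p (S : {set edge n}) :
  Expect p (fun w => ([forall e in S, w e] : bool)%:R) = \prod_(e in S) p e.
Proof.
rewrite /Expect /cfg_prob.
transitivity (\sum_(w : config n) \prod_(e : edge n)
   ((if w e then p e else 1 - p e) * (if e \in S then ((w e : bool)%:R : R) else 1))).
  apply: eq_bigr => w _; rewrite big_split /=; congr (_ * _).
  rewrite -big_mkcond /=; case: forall_inP => H.
    by rewrite big1 // => e /H ->.
  have : ~~ [forall e in S, w e] by apply/forall_inP.
  rewrite negb_forall_in => /exists_inP[e eS we].
  by rewrite (bigD1 e) //= (negbTE we) mul0r.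
rewrite /config -(bigA_distr_bigA (fun e (b : bool) =>
   (if b then p e else 1 - p e) * (if e \in S then (b%:R : R) else 1))) /= [RHS]big_mkcond /=; apply: eq_bigr => e _.
rewrite big_bool /=; case: (e \in S) => /=; rewrite ?mulr1 ?mulr0 ?addr0 //.
by rewrite addrC subrK.
Qed.

End Prob.
Section Edges.
Variable n : nat.
Definition unord (ab : 'I_n * 'I_n) : 'I_n * 'I_n :=
  if (ab.1 < ab.2)%N then ab else (ab.2, ab.1).
Definition nonloop (ab : 'I_n * 'I_n) := ab.1 != ab.2.
Definition simple (ps : seq ('I_n * 'I_n)) := all nonloop ps && uniq (map unord ps).
Definition ematch (e : edge n) (ab : 'I_n * 'I_n) :=
  (val e == ab) || (val e == (ab.2, ab.1)).
Definition eset (ps : seq ('I_n * 'I_n)) : {set edge n} := [set e | has (ematch e) ps].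
Definition alladj (w : config n) ps := all (fun ab : 'I_n * 'I_n => adj w ab.1 ab.2) ps.

Lemma alladj_eset w ps : alladj w ps -> [forall e in eset ps, w e].
Proof.
move=> H; apply/forall_inP => e; rewrite inE => /hasP [ab abin me].
have /existsP [e' /andP [we' me']] := allP H ab abin.
suff -> : e = e' by [].
apply: val_inj; have he := valP e; have he' := valP e'.
move: me me' he he'; rewrite /ematch; case: ab {abin} => a b /=.
case: (val e) => x1 x2; case: (val e') => y1 y2 /=.
by case/orP => /eqP [-> ->]; case/orP => /eqP [-> ->] //= h1 h2;
  have := ltn_trans h1 h2; rewrite ltnn.
Qed.

Lemma ematch_unord e ab : nonloop ab -> ematch e ab = (val e == unord ab).
Proof.
rewrite /nonloop /ematch /unord; case: ab => a b /= ab.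
case: e => [[x1 x2] /= he].
case: ltngtP ab => h ab /=.
- have -> : ((x1, x2) == (b, a)) = false.
    apply/negbTE/negP => /eqP [e1 e2]; subst.
    by move: he; rewrite ltnNge ltnW.
  by rewrite orbF.
- have -> : ((x1, x2) == (a, b)) = false.
    apply/negbTE/negP => /eqP [e1 e2]; subst.
    by move: he; rewrite ltnNge ltnW.
  by [].
- by move: ab; rewrite (val_inj h) eqxx.
Qed.

Lemma unord_lt ab : nonloop ab -> ((unord ab).1 < (unord ab).2)%N.
Proof.
rewrite /nonloop /unord; case: ab => a b /= ab.
case: (ltngtP a b) ab => //= h ab.
by move: ab; rewrite (val_inj h) eqxx.
Qed.

Lemma eset_card ps : simple ps -> (size ps <= #|eset ps|)%N.
Proof.
case/andP => nl un.
have /card_uniqP cu := un.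
rewrite -(size_map unord) -cu -(card_imset _ val_inj).
apply: subset_leq_card; apply/fintype.subsetP => x /mapP [ab abin ->].
have nab := allP nl ab abin.
apply/imsetP; exists (Sub (unord ab) (unord_lt nab) : edge n) => //.
rewrite inE; apply/hasP; exists ab => //.
by rewrite ematch_unord // SubK.
Qed.

Lemma Expect_alladj (R : realType) (p : edge n -> R) (c : R) ps :
  (forall e, 0 <= p e <= c) -> 0 <= c -> c <= 1 -> simple ps ->
  Expect p (fun w => (alladj w ps : bool)%:R) <= c ^+ size ps.
Proof.
move=> hp c0 c1 sp.
have hp1 : forall e, 0 <= p e <= 1.
  by move=> e; have /andP[h0 h1] := hp e; rewrite h0 (le_trans h1).
apply: le_trans (_ : Expect p (fun w => ([forall e in eset ps, w e] : bool)%:R) <= _).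
  apply: Expect_le => // w; case H: (alladj w ps).
    by rewrite (alladj_eset H).
  by rewrite ler0n.
rewrite Expect_forall.
apply: le_trans (_ : \prod_(e in eset ps) c <= _).
  by apply: ler_prod => e _; apply: hp.
rewrite prodr_const; apply: ler_wiXn2l => //; exact: eset_card.
Qed.
End Edges.
Section Seqs.
Variable T : Type.
Lemma last_take (x : T) s m : (m <= size s)%N -> last x (take m s) = nth x (x :: s) m.
Proof.
elim: s x m => [|y s IH] x [|m] //= hm.
by rewrite IH // (set_nth_default x).
Qed.

Lemma path_take (e : rel T) x s m : path e x s -> path e x (take m s).
Proof. by rewrite -{1}(cat_take_drop m s) cat_path => /andP[]. Qed.

Lemma path_drop (e : rel T) x s m : (m <= size s)%N -> path e x s ->
  path e (nth x (x :: s) m) (drop m s).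
Proof. by move=> hm; rewrite -{1}(cat_take_drop m s) cat_path last_take // => /andP[]. Qed.

Lemma last_drop (x : T) s m : (m <= size s)%N -> last (nth x (x :: s) m) (drop m s) = last x s.
Proof. by move=> hm; rewrite -{3}(cat_take_drop m s) last_cat last_take. Qed.

Lemma splice (e : rel T) i A B a b : path e i A -> path e i B ->
  (a <= size A)%N -> (b <= size B)%N -> nth i (i :: A) a = nth i (i :: B) b ->
  [/\ path e i (take a A ++ drop b B), last i (take a A ++ drop b B) = last i B
    & size (take a A ++ drop b B) = (a + (size B - b))%N].
Proof.
move=> pA pB ha hb hn.
rewrite cat_path last_cat last_take // hn path_take //= path_drop // last_drop //.
by rewrite size_cat size_takel // size_drop.
Qed.
End Seqs.

Section Comb.
Variable n : nat.
Implicit Types (x i j k : 'I_n) (s P Q : seq 'I_n) (w : config n).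

Definition pp x s : seq ('I_n * 'I_n) := zip (x :: s) s.

Lemma path_alladj w x s : path (adj w) x s = alladj w (pp x s).
Proof. by elim: s x => [|y s IH] x //=; rewrite IH. Qed.

Lemma size_pp x s : size (pp x s) = size s.
Proof. by rewrite /pp size_zip /=; apply/minn_idPr; exact: leqnSn. Qed.

Lemma mem_pp x s ab : ab \in pp x s -> (ab.1 \in x :: s) && (ab.2 \in s).
Proof.
elim: s x => [|y s IH] x //=; rewrite inE => /orP [/eqP -> | /IH /andP[h1 h2]] /=.
  by rewrite !mem_head.
by rewrite !inE h2 orbT; move: h1; rewrite inE => /orP[->|->]; rewrite ?orbT.
Qed.

Lemma unord_eq (ab cd : 'I_n * 'I_n) : unord ab = unord cd -> ab = cd \/ ab = (cd.2, cd.1).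
Proof.
case: ab cd => a b [c d]; rewrite /unord /=.
by case: ifP => _; case: ifP => _ [e1 e2]; subst; [left|right|right|left].
Qed.

Lemma pp_simple x s : uniq (x :: s) -> simple (pp x s).
Proof.
elim: s x => [|y s IH] x //= /andP [xn u].
have /andP[h1 h2] := IH y u.
rewrite /simple /= -/(pp y s) h1 h2 andbT /=.
apply/andP; split.
  by rewrite /nonloop /=; apply: contraNneq xn => ->; rewrite mem_head.
rewrite andbT; apply/negP => /mapP [[c d] cdin e].
have /andP[c1 c2] := mem_pp cdin.
case: (unord_eq e) => [[ex ey]|[ex ey]]; subst => /=.
  by move: xn; rewrite c1.
by move: xn; rewrite inE c2 orbT.
Qed.

Lemma simple_cat A B (X : seq 'I_n) : simple A -> simple B ->
  (forall ab, ab \in A -> (ab.1 \in X) && (ab.2 \in X)) ->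
  (forall cd, cd \in B -> cd.2 \notin X) -> simple (A ++ B).
Proof.
case/andP => nA uA /andP[nB uB] hA hB.
rewrite /simple all_cat nA nB map_cat cat_uniq uA uB /= andbT.
apply/hasPn => u /mapP [[c d] cdin ->]; apply/negP => /mapP [[a b] abin e].
move: (hB _ cdin) => /negP; apply.
have /andP[ha hb] := hA _ abin.
by case: (unord_eq e) => [[_ ->]|[_ ->]].
Qed.

Lemma walkP w (k : nat) i j : reflect (exists s, [/\ size s = k, path (adj w) i s & last i s = j])
  (walk w k i j).
Proof.
apply: (iffP existsP) => [[s /andP [hp /eqP hl]]|[s [hs hp hl]]].
  by exists (val s); split => //; exact: size_tuple.
have hs' : size s == k by apply/eqP.
by exists (Tuple hs'); rewrite /= hp hl eqxx.
Qed.

Lemma NtP w t i j : reflect (walk w t i j /\ forall l : nat, (l < t)%N -> ~~ walk w l i j)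
  (j \in Nt w t i).
Proof.
rewrite inE; apply: (iffP andP) => [[h1 /forallP h2]|[h1 h2]]; split => //.
  by move=> k kt; have := h2 (Ordinal kt).
by apply/forallP => k; apply: h2; exact: ltn_ord.
Qed.

Lemma Nt_short w t i j s : j \in Nt w t i -> path (adj w) i s -> last i s = j ->
  (t <= size s)%N.
Proof.
case/NtP => _ h ps ls; rewrite leqNgt; apply/negP => lt.
by move: (h _ lt) => /negP; apply; apply/walkP; exists s.
Qed.

Lemma Nt_uniq w t i j : j \in Nt w t i ->
  exists s, [/\ size s = t, path (adj w) i s, last i s = j & uniq (i :: s)].
Proof.
move=> jN; have /NtP [/walkP [s [hs ps ls]] _] := jN.
move: ls; case: (shortenP ps) => s' ps' us' sub ls.
exists s'; split => //.
apply/eqP; rewrite eqn_leq (Nt_short jN ps' ls) andbT -hs.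
apply: uniq_leq_size => //; by case/andP: us'.
Qed.

End Comb.
Lemma count_dep (J : finType) (A : {set J}) (M : nat) (I : 'I_M -> finType)
  (good : forall m, I m -> bool) (f : forall m, I m -> J) :
  (forall j, j \in A -> exists m, exists x : I m, good m x && (f m x == j)) ->
  (#|A| <= \sum_(m < M) \sum_(x : I m) good m x)%N.
Proof.
move=> H.
apply: leq_trans (_ : \sum_(j in A) \sum_(m < M) \sum_(x : I m)
   (good m x && (f m x == j)) <= _)%N.
  rewrite -sum1_card; apply: leq_sum => j jA.
  have [m [x /andP [g fx]]] := H j jA.
  by rewrite (bigD1 m) //= (bigD1 x) //= g fx /= -addnA leq_addr.
rewrite exchange_big /=; apply: leq_sum => m _.
rewrite exchange_big /=; apply: leq_sum => x _.
case: (good m x) => /=; last by rewrite big1.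
apply: leq_trans (_ : \sum_j (f m x == j) <= 1)%N.
  by rewrite [X in (_ <= X)%N](bigID (mem A)) /= leq_addr.
rewrite (bigD1 (f m x)) //= eqxx big1 // => j /negbTE.
by rewrite eq_sym => ->.
Qed.

Section Struct.
Variable n : nat.
Implicit Types (i j k : 'I_n) (w : config n).

Lemma alladj_cat w A B : alladj w (A ++ B) = alladj w A && alladj w B.
Proof. exact: all_cat. Qed.

Lemma first_struct w t i j : j \in Nt w t i -> exists P : seq 'I_n,
  [/\ size P = t, last i P = j & simple (pp i P) && alladj w (pp i P)].
Proof.
move=> jN; have [P [sP pP lP uP]] := Nt_uniq jN.
by exists P; split => //; rewrite pp_simple // -path_alladj.
Qed.

Lemma pair_struct w t i j k : j \in Nt w t i -> k \in Nt w t i ->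
  exists m : 'I_t.+1, exists P : seq 'I_n, exists Rr : seq 'I_n,
  [/\ size P = t, size Rr = (t - m)%N, last i P = j, last (nth i (i :: P) m) Rr = k &
     simple (pp i P ++ pp (nth i (i :: P) m) Rr)
     && alladj w (pp i P ++ pp (nth i (i :: P) m) Rr)].
Proof.
move=> jN kN.
have [P [sP pP lP uP]] := Nt_uniq jN.
have [Q [sQ pQ lQ uQ]] := Nt_uniq kN.
have h0 : nth i (i :: Q) (@ord0 t) \in i :: P by rewrite /= mem_head.
case: (@arg_maxnP _ ord0 (fun b : 'I_t.+1 => nth i (i :: Q) b \in i :: P)
   (fun b : 'I_t.+1 => nat_of_ord b) h0) => m hm mmax.
have mt : (m <= t)%N by rewrite -ltnS ltn_ord.
have mQ : (m <= size Q)%N by rewrite sQ.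
set ym := nth i (i :: Q) m in hm.
have eqm : nth i (i :: P) m = ym.
  set a := index ym (i :: P).
  have ha : (a <= size P)%N by rewrite -ltnS -/(size (i :: P)) index_mem.
  have hna : nth i (i :: P) a = ym by rewrite nth_index.
  case: (ltngtP a m) => ham.
  - have [p1 l1 s1] := splice pP pQ ha mQ hna.
    have := Nt_short kN p1 (etrans l1 lQ); rewrite s1 sQ => h.
    exfalso; rewrite sP in ha; lia.
  - have [p1 l1 s1] := splice pQ pP mQ ha (esym hna).
    have := Nt_short jN p1 (etrans l1 lP); rewrite s1 sP => h.
    exfalso; rewrite sP in ha; lia.
  - by rewrite -ham.
exists m, P, (drop m Q); rewrite eqm; split => //.
- by rewrite size_drop sQ.
- by rewrite /ym last_drop.
apply/andP; split.
  apply: (simple_cat (X := i :: P)).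
  + exact: pp_simple.
  + apply: pp_simple.
    have -> : ym :: drop m Q = drop m (i :: Q).
      by rewrite [RHS](drop_nth i) //= ltnS.
    exact: drop_uniq.
  + move=> ab /mem_pp /andP[h1 h2]; rewrite h1 /=.
    by rewrite inE h2 orbT.
  + move=> cd /mem_pp /andP[_ h2].
    move: h2 => /(nthP i) [l hl <-]; rewrite nth_drop.
    rewrite size_drop sQ in hl.
    have hb : ((m + l).+1 < t.+1)%N by lia.
    apply/negP => hin.
    have := mmax (Ordinal hb) hin; rewrite /=; lia.
rewrite alladj_cat -!path_alladj pP /=.
exact: path_drop.
Qed.

End Struct.
Lemma getN (R : realType) (C : R) (alpha : nat -> R) : C < 1 -> alpha @ \oo --> 0 ->
  exists N, (1 <= N)%N /\ forall n, (N <= n)%N -> C + alpha n < 1.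
Proof.
move=> hC ha.
have : \forall n \near \oo, alpha n < 1 - C.
  by apply: (cvgr_lt _ ha); rewrite subr_gt0.
case=> N _ hN; exists N.+1; split => // n hn.
have := hN n (ltnW hn); rewrite /= => h.
by rewrite -ltrBrDl.
Qed.

Lemma Expect_good (R : realType) n (p : edge n -> R) (q : R) ps :
  (forall e, 0 <= p e <= q) -> 0 <= q -> q <= 1 ->
  Expect p (fun w => ((simple ps && alladj w ps) : bool)%:R) <= q ^+ size ps.
Proof.
move=> hp q0 q1; case sp: (simple ps) => /=.
  exact: Expect_alladj.
rewrite /Expect big1 ?exprn_ge0 // => w _; by rewrite mulr0.
Qed.

Lemma first_moment (R : realType) n (p : edge n -> R) (c : R) (i : 'I_n) t :
  (forall e, 0 <= p e <= c / n%:R) -> 0 < c -> c < 1 ->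
  Expect p (fun w => (#|Nt w t i|)%:R) <= c ^+ t.
Proof.
move=> hp c0 c1.
have n0 : (0 < n)%N by apply: leq_ltn_trans (leq0n i) (ltn_ord i).
have nR : (n%:R : R) != 0 by rewrite pnatr_eq0 -lt0n.
set q := c / n%:R.
have q0 : 0 <= q by rewrite divr_ge0 // ltW.
have q1 : q <= 1.
  rewrite ler_pdivrMr ?ltr0n // mul1r; apply: le_trans (ltW c1) _.
  by rewrite ler1n.
have hp1 : forall e, 0 <= p e <= 1.
  by move=> e; have /andP[h0 h1] := hp e; rewrite h0 (le_trans h1).
apply: le_trans (_ : Expect p (fun w => ((\sum_(m < 1) \sum_(P : t.-tuple 'I_n)
    (simple (pp i P) && alladj w (pp i P)) : nat))%:R) <= _).
  apply: Expect_le => // w; rewrite ler_nat.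
  apply: (@count_dep _ _ 1 (fun _ => (t.-tuple 'I_n : finType))
            (fun _ P => simple (pp i P) && alladj w (pp i P)) (fun _ P => last i P)).
  move=> j jN; have [P [sP lP g]] := first_struct jN.
  have sP' : size P == t by apply/eqP.
  by exists ord0, (Tuple sP'); rewrite /= g lP eqxx.
under eq_fun => w do rewrite natr_sum big_ord1 natr_sum.
rewrite Expect_sum.
apply: le_trans (_ : \sum_(P : t.-tuple 'I_n) q ^+ t <= _).
  apply: ler_sum => P _.
  apply: le_trans (@Expect_good _ _ _ _ (pp i P) hp q0 q1) _.
  by rewrite size_pp size_tuple.
rewrite sumr_const card_tuple card_ord -mulr_natl natrX -exprMn /q.
by rewrite mulrC divfK.
Qed.
Lemma geom_bound (R : realType) (c : R) t : 0 <= c -> c < 1 ->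
  \sum_(m < t.+1) c ^+ (t - m) <= (1 - c)^-1.
Proof.
move=> c0 c1.
rewrite (reindex_inj rev_ord_inj) /=.
under eq_bigr => m _ do rewrite subSS (subKn (leq_ord m)).
set S := \sum_(m < t.+1) _.
have hc : 0 < 1 - c by rewrite subr_gt0.
have eS : (1 - c) * S = 1 - c ^+ t.+1.
  have := subrX1 c t.+1; rewrite -/S => h.
  by rewrite -opprB mulNr -h opprB.
rewrite -[S](mulKf (lt0r_neq0 hc)) eS.
rewrite -[X in _ <= X]mulr1; apply: ler_wpM2l; first by rewrite invr_ge0 ltW.
by rewrite lerBlDr lerDl exprn_ge0.
Qed.

Lemma second_moment (R : realType) n (p : edge n -> R) (c : R) (i : 'I_n) t :
  (forall e, 0 <= p e <= c / n%:R) -> 0 < c -> c < 1 ->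
  Expect p (fun w => (#|Nt w t i|)%:R ^+ 2) <= c ^+ t / (1 - c).
Proof.
move=> hp c0 c1.
have n0 : (0 < n)%N by apply: leq_ltn_trans (leq0n i) (ltn_ord i).
have nR : (n%:R : R) != 0 by rewrite pnatr_eq0 -lt0n.
set q := c / n%:R.
have q0 : 0 <= q by rewrite divr_ge0 // ltW.
have q1 : q <= 1.
  rewrite ler_pdivrMr ?ltr0n // mul1r; apply: le_trans (ltW c1) _.
  by rewrite ler1n.
have hp1 : forall e, 0 <= p e <= 1.
  by move=> e; have /andP[h0 h1] := hp e; rewrite h0 (le_trans h1).
pose ps (m : 'I_t.+1) (x : t.-tuple 'I_n * (t - m).-tuple 'I_n) :=
  pp i x.1 ++ pp (nth i (i :: x.1) m) x.2.
apply: le_trans (_ : Expect p (fun w => ((\sum_(m < t.+1)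
    \sum_(x : (t.-tuple 'I_n * (t - m).-tuple 'I_n)%type)
    (simple (ps m x) && alladj w (ps m x)) : nat))%:R) <= _).
  apply: Expect_le => // w; rewrite -natrX ler_nat expnS expn1 -cardsX.
  apply: (@count_dep _ _ t.+1
     (fun m => ((t.-tuple 'I_n * (t - m).-tuple 'I_n)%type : finType))
     (fun m x => simple (ps m x) && alladj w (ps m x))
     (fun m x => (last i x.1, last (nth i (i :: x.1) m) x.2))).
  move=> [j k]; rewrite finset.in_setX /= => /andP[jN kN].
  have [m [P [Rr [sP sR lP lR g]]]] := pair_struct jN kN.
  have sP' : size P == t by apply/eqP.
  have sR' : size Rr == (t - m)%N by apply/eqP.
  by exists m, (Tuple sP', Tuple sR'); rewrite /= g lP lR eqxx.
under eq_fun => w do rewrite natr_sum.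
rewrite Expect_sum.
apply: le_trans (_ : \sum_(m < t.+1) c ^+ t * c ^+ (t - m) <= _); last first.
  rewrite -mulr_sumr; apply: ler_wpM2l; first by rewrite exprn_ge0 ?ltW.
  exact: geom_bound (ltW c0) c1.
apply: ler_sum => m _.
under eq_fun => w do rewrite natr_sum.
rewrite Expect_sum.
apply: le_trans (_ : \sum_(x : (t.-tuple 'I_n * (t - m).-tuple 'I_n)%type)
   q ^+ (t + (t - m)) <= _).
  apply: ler_sum => x _.
  apply: le_trans (@Expect_good _ _ _ _ (ps m x) hp q0 q1) _.
  by rewrite /ps size_cat !size_pp !size_tuple.
rewrite sumr_const card_prod !card_tuple card_ord -expnD -mulr_natl natrX -exprMn /q.
by rewrite mulrC divfK // exprD.
Qed.

Unset Implicit Arguments. Set Strict Implicit. Set Printing Implicit Defensive.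

Theorem lemma6 (R : realType) (C : R) (alpha : nat -> R)
  (p : forall n : nat, edge n -> R)
  (hC0 : 0 < C) (hC1 : C < 1)
  (halpha0 : forall n, 0 <= alpha n)
  (halpha : alpha @ \oo --> 0)
  (hp01 : forall n (e : edge n), 0 <= p n e <= 1)
  (hp : forall n (e : edge n),
      (C - alpha n) / n%:R <= p n e <= (C + alpha n) / n%:R) :
  exists N : nat, (1 <= N)%N /\
    (forall n, (N <= n)%N -> C + alpha n < 1) /\
    (forall n, (N <= n)%N -> forall (i : 'I_n) (t : nat), (1 <= t <= n)%N ->
       Expect (p n) (fun w => (#|Nt w t i|)%:R) <= (C + alpha n) ^+ t /\
       Expect (p n) (fun w => ((#|Nt w t i|)%:R) ^+ 2)
         <= (C + alpha n) ^+ t / (1 - (C + alpha n))).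
Proof.
have [N [N1 hN]] := getN hC1 halpha.
exists N; split => //; split => // m hm i t _.
have c0 : 0 < C + alpha m by apply: (lt_le_trans hC0); rewrite lerDl.
have c1 := hN m hm.
have hpm : forall e, 0 <= p m e <= (C + alpha m) / m%:R.
  by move=> e; have /andP[h0 _] := hp01 m e; have /andP[_ h1] := hp m e; rewrite h0 h1.
split; [exact: first_moment | exact: second_moment].
Qed.
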